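(* Let $k\ge2$, $\sigma_i=\frac{i(k-i)}2$ for $i=0,\dots,k$, and let $M=(m_{i,j})_{1\le i,j\le k}$ be the symmetric tridiagonal matrix with $m_{i,i-1}=\sigma_{i-1}$, $m_{i,i}=-(\sigma_{i-1}+\sigma_i)$, $m_{i,i+1}=\sigma_i$ and $m_{i,j}=0$ if $|i-j|\ge2$. Then $M$ is diagonalizable with real eigenvalues $-m_i=-\frac{i(i-1)}2$, $i=1,\dots,k$, and an eigenvector for the eigenvalue $-m_1=0$ is $(1,\dots,1)^t$. *)

(* Defs.v *)
From HB Require Import structures.
From mathcomp Require Import all_boot all_order all_algebra.
Set Implicit Arguments. Unset Strict Implicit. Unset Printing Implicit Defensive.
Import Order.TTheory GRing.Theory Num.Theory.
Local Open Scope ring_scope.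

(* sigma_i = i (k - i) / 2, for 0 <= i <= k (nat subtraction harmless there) *)
Definition sigma (R : realFieldType) (k i : nat) : R := (i * (k - i))%:R / 2%:R.

Definition mval (R : realFieldType) (i : nat) : R := (i * i.-1)%:R / 2%:R.

(* Paper indices are 1-based: the paper's
   entry m_{r,s} is (Mk k) (r-1) (s-1).  For 0-based row i (paper row r=i+1):
   m_{r,r-1} = sigma_{r-1} = sigma_i, m_{r,r} = -(sigma_i + sigma_{i+1}),
   m_{r,r+1} = sigma_r = sigma_{i+1}, zero elsewhere. *)
Definition Mk (R : realFieldType) (k : nat) : 'M[R]_k :=
  \matrix_(i < k, j < k)
    if (j.+1 == i :> nat) then sigma R k i
    else if (j == i :> nat) then - (sigma R k i + sigma R k i.+1)
    else if (j == i.+1 :> nat) then sigma R k i.+1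
    else 0.

(* Main.v *)
Require Import Defs.
From HB Require Import structures.
From mathcomp Require Import all_boot all_order all_algebra.
From mathcomp Require Import ring lra zify.
Import Order.TTheory GRing.Theory Num.Theory.
Local Open Scope ring_scope.

Lemma sum_ifeq (R : realFieldType) (k a : nat) (F : nat -> R) :
  \sum_(j < k) (if (j : nat) == a then F j else 0) = if (a < k)%N then F a else 0.
Proof.
elim: k => [|k IH]; first by rewrite big_ord0.
rewrite big_ord_recr /= IH ltnS.
case: (ltngtP a k) => H /=.
- by rewrite addr0.
- by rewrite addr0.
- by rewrite add0r H.
Qed.

Lemma sigma_k (R : realFieldType) k : sigma R k k = 0.
Proof. by rewrite /sigma subnn muln0 mul0r. Qed.

Lemma sigma_0 (R : realFieldType) k : sigma R k 0 = 0.
Proof. by rewrite /sigma mul0n mul0r. Qed.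
Lemma Mk_row (R : realFieldType) k (i : 'I_k) (f : nat -> R) :
  \sum_(j < k) Mk R k i j * f j =
  sigma R k i * f i.-1 - (sigma R k i + sigma R k i.+1) * f i
  + sigma R k i.+1 * f i.+1.
Proof.
have E : forall j : 'I_k, Mk R k i j * f j =
   (if (j:nat) == i.-1 then sigma R k i * f j else 0)
 + (if (j:nat) == i then - (sigma R k i + sigma R k i.+1) * f j else 0)
 + (if (j:nat) == i.+1 then sigma R k i.+1 * f j else 0).
  move=> j; rewrite mxE.
  case: (nat_of_ord i) => [|i'] /=.
    rewrite sigma_0 mul0r if_same add0r.
    case: (nat_of_ord j) => [|[|jj]] /=; by rewrite ?mul0r ?addr0 ?add0r.
  rewrite eqSS.
  case: (nat_of_ord j == i') /eqP => A; case: (nat_of_ord j == i'.+1) /eqP => B;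
  case: (nat_of_ord j == i'.+2) /eqP => C; try lia; by rewrite ?mul0r ?addr0 ?add0r.
rewrite (eq_bigr _ (fun j _ => E j)) !big_split /=.
rewrite (sum_ifeq _ _ _ (fun j => sigma R k i * f j)).
rewrite (sum_ifeq _ _ _ (fun j => - (sigma R k i + sigma R k i.+1) * f j)).
rewrite (sum_ifeq _ _ _ (fun j => sigma R k i.+1 * f j)) /=.
have hi := ltn_ord i.
rewrite (leq_ltn_trans (leq_pred _) hi) hi.
case: ltnP => h; first by rewrite mulNr.
have -> : i.+1 = k by apply/eqP; rewrite eqn_leq hi h.
by rewrite sigma_k !mul0r !addr0 mulNr.
Qed.
Lemma alg (R : realFieldType) (I I1 D D1 D2 K b c c' : R) :
  I1 = I + 1 -> D1 = D + 1 -> D2 = D + 2 ->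
  I * b = (I - D1) * c -> D1 * c = (I - D) * c' ->
  I * (K - I) / 2 * b - (I * (K - I) / 2 + I1 * (K - I1) / 2) * c
  + I1 * (K - I1) / 2 * (c + c')
  = c * - (D2 * D1 / 2) + c' * (D1 * (K - D1) / 2).
Proof.
move=> -> -> -> h2 h1.
have E : I * (K - I) / 2 * b - (I * (K - I) / 2 + (I + 1) * (K - (I + 1)) / 2) * c
  + (I + 1) * (K - (I + 1)) / 2 * (c + c')
  - (c * - ((D + 2) * (D + 1) / 2) + c' * ((D + 1) * (K - (D + 1)) / 2))
  = ((K - I) * (I * b - (I - (D + 1)) * c)
     + (D + 2 - K + I) * ((D + 1) * c - (I - D) * c')) / 2.
  by field.
apply/eqP; rewrite -subr_eq0 E h2 h1 !subrr !mulr0 addr0 mul0r.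
by [].
Qed.

Lemma key (R : realFieldType) k (i d : nat) (hi : (i < k)%N) (hd : (d < k)%N) :
  sigma R k i * 'C(i.-1, d)%:R - (sigma R k i + sigma R k i.+1) * 'C(i, d)%:R
  + sigma R k i.+1 * 'C(i.+1, d)%:R
  = 'C(i, d)%:R * - mval R d.+1 + 'C(i, d.-1)%:R * sigma R k d.
Proof.
rewrite /sigma /mval.
case: d hd => [|d] hd.
  rewrite !bin0 /= muln0 mul0r; lra.
rewrite binS /=.
have H1 : (d.+1 * 'C(i, d.+1))%N%:R = (i%:R - d%:R) * 'C(i, d)%:R :> R.
  rewrite mul_bin_left; case: (leqP d i) => h.
    by rewrite natrM natrB.
  by rewrite bin_small // muln0 mulr0.
have H2 : (i * 'C(i.-1, d.+1))%N%:R = (i%:R - d.+1%:R) * 'C(i, d.+1)%:R :> R.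
  rewrite mul_bin_down; case: (leqP d.+1 i) => h.
    by rewrite natrM natrB.
  by rewrite bin_small // muln0 mulr0.
rewrite !natrM in H1 H2.
rewrite !natrM natrB ?(ltnW hi) // natrB // natrB ?(ltnW hd) // natrD.
apply: alg H2 H1; rewrite -?natr1 // -addrA mulr0n add0r.
by [].
Qed.

Definition Vm (R : realFieldType) k : 'M[R]_k := \matrix_(i < k, d < k) 'C(i, d)%:R.
Definition Tm (R : realFieldType) k : 'M[R]_k :=
  \matrix_(e < k, d < k)
    if (e == d :> nat) then - mval R d.+1
    else if (e.+1 == d :> nat) then sigma R k d else 0.

Lemma MV (R : realFieldType) k : Mk R k *m Vm R k = Vm R k *m Tm R k.
Proof.
apply/matrixP => i d; rewrite !mxE.
under eq_bigr => j _ do rewrite [Vm _ _ j d]mxE.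
have /= -> := Mk_row _ _ i (fun j => 'C(j, d)%:R); rewrite key //.
have E : forall e : 'I_k, Vm R k i e * Tm R k e d =
   (if (e:nat) == d then 'C(i, e)%:R * - mval R d.+1 else 0)
 + (if (e:nat) == d.-1 then 'C(i, e)%:R * sigma R k d else 0).
  move=> e; rewrite !mxE.
  case: (nat_of_ord d) => [|d'] /=.
    rewrite sigma_0 mulr0 if_same addr0.
    by case: (nat_of_ord e) => [|e'] /=; rewrite ?mulr0.
  rewrite eqSS.
  case: (nat_of_ord e == d'.+1) /eqP => A; case: (nat_of_ord e == d') /eqP => B;
    try lia; by rewrite ?mulr0 ?addr0 ?add0r.
rewrite (eq_bigr _ (fun e _ => E e)) big_split /=.
rewrite (sum_ifeq _ _ _ (fun e => 'C(i, e)%:R * - mval R d.+1)).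
rewrite (sum_ifeq _ _ _ (fun e => 'C(i, e)%:R * sigma R k d)) /=.
have hd := ltn_ord d.
by rewrite hd (leq_ltn_trans (leq_pred _) hd).
Qed.

Lemma Vunit (R : realFieldType) k : Vm R k \in unitmx.
Proof.
rewrite unitmxE det_trig.
  by rewrite big1 ?unitr1 // => i _; rewrite mxE binn.
by apply/is_trig_mxP => i j h; rewrite mxE bin_small.
Qed.

Lemma charT (R : realFieldType) k :
  char_poly (Tm R k) = \prod_(i < k) ('X - (- mval R i.+1)%:P).
Proof.
have -> : char_poly (Tm R k) = char_poly (Tm R k)^T.
  rewrite /char_poly -det_tr; congr (\det _).
  apply/matrixP => i j; rewrite !mxE.
  by case: (eqVneq i j) => [->|ne] //=; rewrite eq_sym (negbTE ne).
rewrite char_poly_trig.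
  by apply: eq_bigr => i _; rewrite !mxE eqxx.
apply/is_trig_mxP => i j h; rewrite !mxE.
rewrite (gtn_eqF h).
by rewrite (_ : (j.+1 == i) = false) //; apply/negbTE; rewrite neq_ltn (ltn_trans h) ?orbT.
Qed.

Theorem lemma2p5 (R : realFieldType) (k : nat) (hk : (2 <= k)%N) :
  diagonalizable (Mk R k)
  /\ (forall a : R, eigenvalue (Mk R k) a <->
        exists i : 'I_k, a = - mval R i.+1)
  /\ (Mk R k) *m (const_mx 1 : 'cV[R]_k) = 0.
Proof.
case: k hk => [//|k'] hk.
set M := Mk R k'.+1; set V := Vm R k'.+1; set T := Tm R k'.+1.
have hV : V \in unitmx by apply: Vunit.
have hM : M = conjmx V T by rewrite conjumx // -MV mulmxK.
have hmin : mxminpoly M = mxminpoly T by rewrite hM mxminpoly_uconj.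
set rs := [seq - mval R (nat_of_ord i).+1 | i : 'I_k'.+1 <- enum 'I_k'.+1].
have hprod : char_poly T = \prod_(x <- rs) ('X - x%:P).
  by rewrite charT big_map big_enum.
split; [|split].
- apply/diagonalizableP; exists rs.
    rewrite map_inj_uniq ?enum_uniq // => i j /oppr_inj /eqP.
    rewrite /mval (can_eq (mulfK _)) ?invr_eq0 ?pnatr_eq0 //. rewrite (@eqr_nat R) => /eqP h.
    apply: val_inj => /=; nia.
  by rewrite hmin -hprod mxminpoly_dvd_char.
- move=> a; rewrite eigenvalue_root_min hmin root_mxminpoly hprod root_prod_XsubC.
  split.
    by case/mapP => i _ ->; exists i.
  by case=> i ->; apply/mapP; exists i; rewrite ?mem_enum.
- apply/matrixP => i j; rewrite [RHS]mxE mxE.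
  under eq_bigr => l _ do rewrite [const_mx 1 l j]mxE.
  have /= -> := Mk_row _ _ i (fun _ => 1).
  lra.
Qed.
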